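(* If $Q$ is a quantity space over a field $K$, then $Q$ is distributive: for all dimensions $\mathsf{A},\mathsf{B}\in Q/{\sim}$, all $x,y\in\mathsf{A}$ and all $z\in\mathsf{B}$ we have $(x+y)z=xz+yz$ and $z(x+y)=zx+zy$.
   Context: A scalable monoid over a (unital, associative) ring $R$ is a monoid $X$ (identity $1_X$, product written $xy$) together with a map $R\times X\to X$, $(\alpha,x)\mapsto\alpha\cdot x$, such that $1\cdot x=x$, $\alpha\cdot(\beta\cdot x)=\alpha\beta\cdot x$ and $\alpha\cdot(xy)=(\alpha\cdot x)y=x(\alpha\cdot y)$. A quantity space over a field $K$ is a commutative scalable monoid $Q$ over $K$ for which there exists a basis, i.e. a finite set $\{e_1,\ldots,e_n\}$ of invertible elements of $Q$ such that every $x\in Q$ has a unique expansion $x=\mu\cdot\prod_{i=1}^n e_i^{k_i}$ with $\mu\in K$ and $k_i\in\mathbb{Z}$. On $Q$, $x\sim y$ iff $\alpha\cdot x=\beta\cdot y$ for some $\alpha,\beta\in K$; classes are dimensions. A unit element for a class $\mathsf{C}$ is some $u\in\mathsf{C}$ such that every $x\in\mathsf{C}$ equals $\lambda\cdot u$ for some $\lambda\in K$ and $\lambda\cdot u=\lambda'\cdot u$ implies $\lambda=\lambda'$. If $u$ is a unit element for $\mathsf{C}$ and $x=\rho\cdot u$, $y=\sigma\cdot u$, then $x+y:=(\rho+\sigma)\cdot u$ (independent of the choice of $u$); every dimension of a quantity space has a unit element, so this sum is defined for any two elements of the same dimension. *)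

(* Defs.v *)
From HB Require Import structures.
From mathcomp Require Import all_boot all_order all_algebra.
From Stdlib Require Import ClassicalEpsilon.
Set Implicit Arguments. Unset Strict Implicit. Unset Printing Implicit Defensive.
Import GRing.Theory.
Local Open Scope ring_scope.

Record scalable_monoid (K : fieldType) := ScalableMonoid {
  carrier :> Type;
  smul : carrier -> carrier -> carrier;
  sone : carrier;
  sscale : K -> carrier -> carrier;
  smulA : forall x y z, smul x (smul y z) = smul (smul x y) z;
  smul1x : forall x, smul sone x = x;
  smulx1 : forall x, smul x sone = x;
  sscale1 : forall x, sscale 1 x = x;
  sscaleA : forall a b x, sscale a (sscale b x) = sscale (a * b) x;
  sscale_mull : forall a x y, sscale a (smul x y) = smul (sscale a x) y;
  sscale_mulr : forall a x y, sscale a (smul x y) = smul x (sscale a y)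
}.

Section Defs.
Variables (K : fieldType) (Q : scalable_monoid K).

Definition smul_comm : Prop := forall x y : Q, smul x y = smul y x.

Definition sinvertible (e : Q) : Prop :=
  exists f : Q, smul e f = sone Q /\ smul f e = sone Q.

Definition snpow (e : Q) (k : nat) : Q := iter k (smul e) (sone Q).

(* integer power e^k, given an inverse f of e *)
Definition szpow (e f : Q) (k : int) : Q :=
  match k with
  | Posz m => snpow e m
  | Negz m => snpow f m.+1
  end.

Definition basis_mono (n : nat) (e f : 'I_n -> Q) (k : 'I_n -> int) : Q :=
  \big[@smul K Q / sone Q]_(i < n) szpow (e i) (f i) (k i).

Definition is_basis (n : nat) (e : 'I_n -> Q) : Prop :=
  exists f : 'I_n -> Q,
    (forall i, smul (e i) (f i) = sone Q /\ smul (f i) (e i) = sone Q) /\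
    (forall x : Q, exists (mu : K) (k : 'I_n -> int),
        x = sscale mu (basis_mono e f k)) /\
    (forall (mu mu' : K) (k k' : 'I_n -> int),
        sscale mu (basis_mono e f k) = sscale mu' (basis_mono e f k') ->
        mu = mu' /\ forall i, k i = k' i).

Definition quantity_space : Prop :=
  smul_comm /\ exists (n : nat) (e : 'I_n -> Q), is_basis e.

Definition ssim (x y : Q) : Prop := exists a b : K, sscale a x = sscale b y.

Definition unit_elem_of (u x : Q) : Prop :=
  ssim u x /\
  (forall w, ssim w x -> exists lam : K, w = sscale lam u) /\
  (forall lam lam' : K, sscale lam u = sscale lam' u -> lam = lam').

Definition is_qsum (x y s : Q) : Prop :=
  exists (u : Q) (rho sigma : K),
    unit_elem_of u x /\ x = sscale rho u /\ y = sscale sigma u /\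
    s = sscale (rho + sigma) u.

(* the sum x + y (well defined for x ~ y in a quantity space) *)
Definition qsum (x y : Q) : Q := epsilon (inhabits x) (is_qsum x y).

End Defs.

(* Main.v *)
Require Import Defs.
From mathcomp Require Import all_boot all_order all_algebra.
From Stdlib Require Import ClassicalEpsilon.
Import GRing.Theory.
Local Open Scope ring_scope.

Section S.
Variables (K : fieldType) (Q : scalable_monoid K) (n : nat) (e f : 'I_n -> Q).
Hypothesis Hex : forall x : Q, exists (mu : K) (k : 'I_n -> int),
        x = sscale mu (basis_mono e f k).
Hypothesis Huniq : forall (mu mu' : K) (k k' : 'I_n -> int),
        sscale mu (basis_mono e f k) = sscale mu' (basis_mono e f k') ->
        mu = mu' /\ forall i, k i = k' i.

Local Notation M := (basis_mono e f).

Lemma M_ext k k' : (forall i, k i = k' i) -> M k = M k'.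
Proof. move=> H; rewrite /basis_mono; apply: eq_bigr => i _; by rewrite H. Qed.

Lemma sim_same k k' a b : sscale a (M k) = sscale b (M k') -> M k = M k'.
Proof. by move=> /Huniq [_ H]; apply: M_ext. Qed.

Lemma qsum_val x y mu nu k : x = sscale mu (M k) -> y = sscale nu (M k) ->
  qsum x y = sscale (mu + nu) (M k).
Proof.
move=> Hx Hy.
have Hq : is_qsum x y (sscale (mu + nu) (M k)).
  exists (M k), mu, nu; split; last by [].
  split; first by exists mu, 1; rewrite sscale1 Hx.
  split.
    move=> w [a [b Hw]]; have [d [k' Hw']] := Hex w.
    exists d; rewrite Hw'; congr sscale.
    move: Hw; rewrite Hw' Hx !sscaleA => /sim_same ->; done.
  by move=> l l' /Huniq [].
have := epsilon_spec (inhabits x) (is_qsum x y) (ex_intro _ _ Hq).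
rewrite -/(qsum x y).
move: (qsum x y) => s [u [rho [sigma [[Hux [_ _]] [Hxu [Hyu ->]]]]]].
have [c [k' Hu]] := Hex u.
move: Hux => [a [b Hab]].
move: Hab; rewrite Hu Hx !sscaleA => /sim_same Hkk.
move: Hxu Hyu; rewrite Hu Hkk Hx Hy !sscaleA => /Huniq [-> _] /Huniq [-> _].
by rewrite mulrDl.
Qed.

End S.

Theorem proposition3p11 (K : fieldType) (Q : scalable_monoid K) :
  quantity_space Q ->
  forall x y z : Q, ssim x y ->
    smul (qsum x y) z = qsum (smul x z) (smul y z) /\
    smul z (qsum x y) = qsum (smul z x) (smul z y).
Proof.
move=> [_ [n [e [f [_ [Hex Huniq]]]]]] x y z [a [b Hab]].
have [mu [k Hx]] := Hex x.
have [nu [k' Hy]] := Hex y.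
have Hkk : basis_mono e f k' = basis_mono e f k.
  move: Hab; rewrite Hx Hy !sscaleA => /(@sim_same _ _ _ _ _ Huniq) ->; done.
rewrite Hkk in Hy.
rewrite (@qsum_val _ _ _ _ _ Hex Huniq _ _ _ _ _ Hx Hy).
have [c [l Hl]] := Hex (smul (basis_mono e f k) z).
have [c' [l' Hl']] := Hex (smul z (basis_mono e f k)).
split.
  rewrite -sscale_mull Hl sscaleA.
  rewrite (@qsum_val _ _ _ _ _ Hex Huniq _ _ (mu * c) (nu * c) l).
  - by rewrite mulrDl.
  - by rewrite Hx -sscale_mull Hl sscaleA.
  - by rewrite Hy -sscale_mull Hl sscaleA.
rewrite -sscale_mulr Hl' sscaleA.
rewrite (@qsum_val _ _ _ _ _ Hex Huniq _ _ (mu * c') (nu * c') l').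
- by rewrite mulrDl.
- by rewrite Hx -sscale_mulr Hl' sscaleA.
- by rewrite Hy -sscale_mulr Hl' sscaleA.
Qed.
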